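(* For $n\ge2$ let $R_n$ be the set of words $\rho$ of length $n$ over the alphabet $\{0,1\}$ such that $\rho$ does not start with $01$, $\rho$ does not end with $10$, and $\rho$ does not contain $101$ as a factor. Then $|R_n|=\Theta(\alpha^n)$, where $\alpha\approx1.755$ is the unique positive root of the polynomial $x^4-x^3-x^2-1$.
   Context: $|R_n|=\Theta(\alpha^n)$ means there exist positive constants $c_1,c_2$ with $c_1\alpha^n\le|R_n|\le c_2\alpha^n$ for all $n\ge2$. *)

(* Defs.v *)
(* Words over {0,1} are encoded as n.-tuple bool, with
   false = 0 and true = 1. *)
From mathcomp Require Import all_boot all_order all_algebra.
Set Implicit Arguments. Unset Strict Implicit. Unset Printing Implicit Defensive.
Import Order.TTheory GRing.Theory Num.Theory.

Definition starts01 (s : seq bool) : bool := prefix [:: false; true] s.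
Definition ends10 (s : seq bool) : bool := suffix [:: true; false] s.
Definition has101 (s : seq bool) : bool := infix [:: true; false; true] s.

Definition Rset (n : nat) : {set n.-tuple bool} :=
  [set w : n.-tuple bool | [&& ~~ starts01 w, ~~ ends10 w & ~~ has101 w]].

Local Open Scope ring_scope.
Definition palpha {R : numDomainType} (x : R) : R := x ^+ 4 - x ^+ 3 - x ^+ 2 - 1.

(* Main.v *)
Require Import Defs.
From mathcomp Require Import all_boot all_order all_algebra.
From mathcomp Require Import reals.
From mathcomp Require Import zify.
From mathcomp Require Import ring lra.
Import Order.TTheory GRing.Theory Num.Theory.

Fixpoint words (n : nat) : seq (seq bool) :=
  if n is m.+1 then map (cons false) (words m) ++ map (cons true) (words m)
  else [:: [::]].

Lemma mem_words n s : (s \in words n) = (size s == n).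
Proof.
elim: n s => [|n IH] [|b s] //=; rewrite ?mem_cat ?inE //.
- by apply/orP; case=> /mapP [].
- rewrite eqSS -IH; apply/orP/idP.
  + by case=> /mapP [t Ht [_ ->]].
  + by case: b => Hs; [right|left]; apply/map_f.
Qed.

Lemma uniq_words n : uniq (words n).
Proof.
elim: n => //= n IH; rewrite cat_uniq !map_inj_uniq //; try by move=> x y [].
rewrite IH /= andbT; apply/hasPn => s /mapP [t _ ->]; by apply/mapP => -[u _] [].
Qed.

Lemma count_words p n : count p (words n.+1) =
  (count (fun w => p (false :: w)) (words n) + count (fun w => p (true :: w)) (words n))%N.
Proof. by rewrite /= count_cat !count_map. Qed.

Definition Qw (w : seq bool) := [&& ~~ starts01 w, ~~ ends10 w & ~~ has101 w].

Lemma card_Rset n : #|Rset n| = count Qw (words n).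
Proof.
rewrite cardE size_filter /enum_mem.
rewrite -size_filter /= size_filter.
have -> : count (mem (Rset n)) (Finite.enum (n.-tuple bool)) =
  count Qw (map val (Finite.enum (n.-tuple bool))).
  by rewrite count_map; apply: eq_count => t; rewrite /= inE.
apply/permP/uniq_perm; first (rewrite map_inj_uniq; [by rewrite -enumT enum_uniq | exact: val_inj]).
  exact: uniq_words.
move=> s; rewrite mem_words; apply/mapP/eqP => [[t _ ->]|Hs]; first exact: size_tuple.
by exists (Tuple (introT eqP Hs)); rewrite // -enumT mem_enum.
Qed.

Definition Aw (w : seq bool) := ~~ ends10 w && ~~ has101 w.

Lemma ends10_cons a s : (1 < size s)%N -> ends10 (a :: s) = ends10 s.
Proof.
move=> Hs; rewrite /ends10 !suffixE /=.
have -> : (size s).+1 - 2 = (size s - 2).+1 by lia.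
by [].
Qed.

Lemma Aw_cons a b c w : Aw [:: a, b, c & w] = ~~ [&& a, ~~ b & c] && Aw [:: b, c & w].
Proof.
rewrite /Aw ends10_cons //= /has101 infix_consl.
have -> : prefix [:: true; false; true] [:: a, b, c & w] = [&& a, ~~ b & c].
  by case: a; case: b; case: c => //=; rewrite prefix0s.
by case: (ends10 _); case: (infix _ _); case: a; case: b; case: c.
Qed.

Definition S n a b := count (fun w => Aw [:: a, b & w]) (words n).

Lemma Qw_cons a b w : Qw [:: a, b & w] = ~~ (~~ a && b) && Aw [:: a, b & w].
Proof. by rewrite /Qw /Aw /starts01 /=; case: a; case: b; rewrite /= ?prefix0s. Qed.

Lemma S_rec n a b : S n.+1 a b =
  ((if [&& a, ~~ b & false] then 0 else S n b false) +
   (if [&& a, ~~ b & true] then 0 else S n b true))%N.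
Proof.
rewrite /S count_words; congr addn.
  case: ifP => H; last by apply: eq_count => w; rewrite Aw_cons H.
  by rewrite (eq_count (a2 := pred0)) ?count_pred0 // => w; rewrite Aw_cons H.
case: ifP => H; last by apply: eq_count => w; rewrite Aw_cons H.
by rewrite (eq_count (a2 := pred0)) ?count_pred0 // => w; rewrite Aw_cons H.
Qed.

Lemma R_S n : #|Rset n.+2| = (S n false false + S n true false + S n true true)%N.
Proof.
rewrite card_Rset count_words !count_words /S.
rewrite !(eq_count (Qw_cons _ _)) /=.
by rewrite count_pred0 addn0 addnA.
Qed.

Lemma S_ff k : S k.+1 false false = (S k false false + S k false true)%N.
Proof. by rewrite S_rec. Qed.
Lemma S_ft k : S k.+1 false true = (S k true false + S k true true)%N.
Proof. by rewrite S_rec. Qed.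
Lemma S_tf k : S k.+1 true false = S k false false.
Proof. by rewrite S_rec addn0. Qed.
Lemma S_tt k : S k.+1 true true = (S k true false + S k true true)%N.
Proof. by rewrite S_rec. Qed.
Lemma S_yw k : S k false true = S k true true.
Proof. by case: k => [|k]; rewrite ?S_ft ?S_tt. Qed.

Lemma R_rec k : #|Rset k.+4.+2| = (#|Rset k.+4.+1| + #|Rset k.+4| + #|Rset k.+2|)%N.
Proof.
rewrite !R_S.
have := S_ff k; have := S_ff k.+1; have := S_ff k.+2; have := S_ff k.+3.
have := S_tf k; have := S_tf k.+1; have := S_tf k.+2; have := S_tf k.+3.
have := S_tt k; have := S_tt k.+1; have := S_tt k.+2; have := S_tt k.+3.
have := S_yw k; have := S_yw k.+1; have := S_yw k.+2; have := S_yw k.+3.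
lia.
Qed.

Lemma R_small : [/\ #|Rset 2| = 2, #|Rset 3| = 4, #|Rset 4| = 7 & #|Rset 5| = 12]%N.
Proof. by rewrite !R_S. Qed.

Local Open Scope ring_scope.

Lemma palpha_uniq (R : realType) (a b : R) : 0 < a -> 0 < b ->
  palpha a = 0 -> palpha b = 0 -> a = b.
Proof.
move=> a0 b0 Ha Hb.
pose P := a ^+ 3 * b ^+ 3 + a ^+ 2 * b ^+ 2 * (a + b) + (a + b) * (a ^+ 2 + b ^+ 2).
have E : (a - b) * P = b ^+ 4 * palpha a - a ^+ 4 * palpha b.
  by rewrite /P /palpha; ring.
have P0 : 0 < P.
  by rewrite /P; apply: addr_gt0; [apply: addr_gt0|]; apply: mulr_gt0;
     rewrite ?exprn_gt0 ?addr_gt0 ?mulr_gt0 ?exprn_gt0.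
move: E; rewrite Ha Hb !mulr0 subr0 => /eqP; rewrite mulf_eq0 (gt_eqF P0) orbF.
by rewrite subr_eq0 => /eqP.
Qed.

Lemma palpha_exists (R : realType) : exists2 a : R, 0 < a & palpha a = 0.
Proof.
pose p : {poly R} := 'X^4 - 'X^3 - 'X^2 - 1.
have hp x : p.[x] = palpha x by rewrite /p /palpha !hornerE.
have [x /andP [x0 x2] rx] : exists2 x : R, 0 <= x <= 2 & root p x.
  apply: poly_ivt; first by lra.
  rewrite !hp /palpha; apply/andP; split; first by rewrite expr0n /=; lra.
  have -> : (2 : R) ^+ 4 - 2 ^+ 3 - 2 ^+ 2 - 1 = 3 by rewrite !exprS expr0; ring.
  by lra.
have px : palpha x = 0 by rewrite -hp; apply/eqP.
exists x => //; rewrite lt_neqAle x0 andbT; apply/eqP => x0'.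
by move: px; rewrite -x0' /palpha !expr0n /=; lra.
Qed.

Theorem lemma8p1 (R : realType) :
  (exists alpha : R, 0 < alpha /\ palpha alpha = 0 /\
     forall beta : R, 0 < beta -> palpha beta = 0 -> beta = alpha) /\
  (forall alpha : R, 0 < alpha -> palpha alpha = 0 ->
     exists c1 c2 : R, 0 < c1 /\ 0 < c2 /\
       forall n : nat, (2 <= n)%N ->
         c1 * alpha ^+ n <= (#|Rset n|)%:R /\ (#|Rset n|)%:R <= c2 * alpha ^+ n).
Proof.
split.
  have [a a0 pa] := palpha_exists R.
  by exists a; split=> //; split=> // b b0 pb; apply: palpha_uniq.
move=> a a0 pa.
have a1 : 1 < a.
  have E : a ^+ 3 * (a - 1) = a ^+ 2 + 1 by move: pa; rewrite /palpha => pa; 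
    apply/eqP; rewrite -subr_eq0 -pa; apply/eqP; ring.
  have : 0 < a ^+ 3 * (a - 1) by rewrite E; apply: addr_gt0; rewrite ?exprn_gt0.
  by rewrite pmulr_rgt0 ?exprn_gt0 // subr_gt0.
have a5 : 0 < a ^+ 5 by rewrite exprn_gt0.
exists (a ^+ 5)^-1, 16; split; first by rewrite invr_gt0.
split; first by [].
suff H : forall m n, (n <= m)%N -> (2 <= n)%N ->
  (a ^+ 5)^-1 * a ^+ n <= (#|Rset n|)%:R /\ (#|Rset n|)%:R <= 16 * a ^+ n.
  by move=> n; apply: H (leqnn n).
elim=> [|m IH] n Hnm Hn; first by case: n Hnm Hn.
have [Hn5|Hn5] := leqP n 5.
  have [r2 r3 r4 r5] := R_small.
  have Hr : (2 <= #|Rset n| <= 12)%N.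
    by case: n Hnm Hn Hn5 => [|[|[|[|[|[|]]]]]] //= *; rewrite ?r2 ?r3 ?r4 ?r5.
  have an1 : 1 <= a ^+ n by rewrite exprn_ege1 // ltW.
  have an5 : a ^+ n <= a ^+ 5 by rewrite ler_eXn2l.
  have R1 : 2 <= (#|Rset n|)%:R :> R by rewrite (ler_nat R 2); case/andP: Hr.
  have R2 : (#|Rset n|)%:R <= 12 :> R by rewrite (ler_nat R _ 12); case/andP: Hr.
  split; last by lra.
  by rewrite mulrC ler_pdivrMr //; nra.
case: n Hnm Hn Hn5 => [|[|[|[|[|[|k]]]]]] //= Hnm _ _.
have := IH k.+4.+1 ltac:(lia) isT; have := IH k.+4 ltac:(lia) isT;
  have := IH k.+2 ltac:(lia) isT.
rewrite R_rec !natrD.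
have E1 : a ^+ k.+4.+2 = a ^+ k.+4.+1 + a ^+ k.+4 + a ^+ k.+2 + a ^+ k.+2 * palpha a.
  by rewrite /palpha !exprS; ring.
rewrite pa mulr0 addr0 in E1; rewrite E1.
move=> [h1 h2] [h3 h4] [h5 h6]; split; lra.
Qed.
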